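(* Let $X$ be the subshift obtained from the marker construction described in the context. For each $x \in X$ and each $j \in \mathbb{N}$ there is a unique decomposition of $x$ into $\mathcal{C}_j$-words, i.e., there is a unique $r \in \{0,1,\dots,l_j-1\}$ such that $x_{[r+kl_j,\, r+(k+1)l_j)} \in \mathcal{C}_j$ for all $k \in \mathbb{Z}$.
   Context: Marker construction. Let $l_1$ be a sufficiently large perfect square and $N_1 = 2^{\sqrt{l_1}}$. Let $\mathcal{C}_1$ be a set of $N_1$ binary words of length $l_1$, each beginning with $001$, such that the word $00$ occurs in each element of $\mathcal{C}_1$ only as its prefix. Inductively, given a set $\mathcal{C}_j$ of $N_j$ distinct words of length $l_j$ with an ordering $\mathcal{C}_j = \{u_1^{(j)},\dots,u_{N_j}^{(j)}\}$, let $P_j = \{2\}\cup\{i^2 : 2 \le i \le \lfloor\sqrt{N_j}\rfloor\}$, and let $\mathcal{C}_{j+1}$ be the set of all words $u^{(j)}_{\pi(1)}u^{(j)}_{\pi(2)}\cdots u^{(j)}_{\pi(N_j)}$ where $\pi$ ranges over permutations of $\{1,\dots,N_j\}$ fixing every element outside $P_j$. Thus $N_{j+1} = (\lfloor\sqrt{N_j}\rfloor)!$ and $l_{j+1} = l_j N_j$. The ordering of $\mathcal{C}_{j+1}$ is arbitrary except that its first element $u^{(j+1)}_1$ is $u_1^{(j)}u_2^{(j)}\cdots u_{N_j}^{(j)}$. $X \subset \{0,1\}^{\mathbb{Z}}$ is the set of bi-infinite sequences each finite subword of which is a subword of some word in $\bigcup_j \mathcal{C}_j$. *)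

(* Defs.v *)
From mathcomp Require Import all_boot all_order all_algebra all_fingroup.
Set Implicit Arguments. Unset Strict Implicit. Unset Printing Implicit Defensive.
Import GRing.Theory Num.Theory.

Definition word := seq bool.

Definition oo_only_prefix (w : word) : Prop :=
  forall i, i.+1 < size w -> nth true w i = false -> nth true w i.+1 = false -> i = 0.

Definition good_C1 (l1 m : nat) (u : seq word) : Prop :=
  [/\ uniq u, size u = 2 ^ m,
      all (fun w => size w == l1) u,
      all (fun w => prefix [:: false; false; true] w) u &
      forall w, w \in u -> oo_only_prefix w].

(* P_j in 0-based positions: position p (1-based p+1) is in P_j iff
   p+1 = 2 or p+1 = i^2 with 2 <= i <= floor(sqrt N). *)
Definition inP (N p : nat) : bool :=
  (p.+1 == 2) || [exists i : 'I_(Nat.sqrt N).+1, (2 <= i) && (p.+1 == i * i)].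

Definition perm_word (u : seq word) (pi : {perm 'I_(size u)}) : word :=
  flatten [seq nth [::] u (pi i) | i <- enum 'I_(size u)].

Definition in_next (u : seq word) (w : word) : Prop :=
  exists pi : {perm 'I_(size u)},
    (forall i : 'I_(size u), ~~ inP (size u) i -> pi i = i) /\ w = perm_word pi.

Definition next_level (u v : seq word) : Prop :=
  [/\ uniq v, (forall w, w \in v <-> in_next u w) & nth [::] v 0 = flatten u].

(* Lengths: L C l1 j = l_{j+1} (0-based index j). *)
Fixpoint lens (C : nat -> seq word) (l1 j : nat) : nat :=
  match j with
  | 0 => l1
  | j'.+1 => lens C l1 j' * size (C j')
  end.

Definition window (x : int -> bool) (a : int) (n : nat) : word :=
  mkseq (fun i => x (a + i%:Z)%R) n.

Definition in_X (C : nat -> seq word) (x : int -> bool) : Prop :=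
  forall (a : int) (n : nat), exists j w, w \in C j /\ infix (window x a n) w.

(* Main.v *)
Require Import Defs.
From mathcomp Require Import all_boot all_order all_algebra all_fingroup zify ring.
Import GRing.Theory Num.Theory.
Set Implicit Arguments.

Lemma size_flatten_c (s : seq word) l : all (fun v => size v == l) s ->
  size (flatten s) = size s * l.
Proof. elim: s => //= v s IH /andP[/eqP h1 h2]; rewrite size_cat IH // h1; lia. Qed.

Lemma block_flatten (s : seq word) l Q : all (fun v => size v == l) s ->
  Q < size s -> take l (drop (Q * l) (flatten s)) = nth [::] s Q.
Proof.
elim: s Q => //= v s IH [|Q] /andP[/eqP h1 h2] hQ.
  by rewrite mul0n drop0 take_size_cat.
rewrite mulSn drop_cat h1 ltnNge leq_addr /= -addnBAC // subnn add0n.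
exact: IH.
Qed.

Lemma infix_flatten (s : seq word) w : w \in s -> infix w (flatten s).
Proof.
move=> /splitPr [s1 s2]; rewrite flatten_cat /=.
by apply: infix_catl; apply: prefix_infix.
Qed.

Lemma nth_window x a n i b : i < n -> nth b (window x a n) i = x (a + i%:Z)%R.
Proof. by move=> h; rewrite nth_mkseq. Qed.

Lemma size_window x a n : size (window x a n) = n.
Proof. by rewrite size_mkseq. Qed.

Lemma window_sub x a m d n : d + n <= m ->
  take n (drop d (window x a m)) = window x (a + d%:Z)%R n.
Proof.
move=> h; apply: (@eq_from_nth _ false).
  rewrite size_take size_drop !size_window; case: ifP => // /negbT; lia.
move=> i; rewrite size_take size_drop size_window => hi.
have hin : i < n by move: hi; case: ifP => /= h2; lia.
rewrite nth_take // nth_drop !nth_window //; last lia.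
by congr x; rewrite PoszD addrA.
Qed.

Lemma prefix001 (w : word) : prefix [:: false; false; true] w ->
  [/\ nth true w 0 = false, nth true w 1 = false, nth true w 2 = true & 3 <= size w].
Proof. by case: w => [|[] [|[] [|[] w]]]. Qed.

Lemma perm_word_all (u : seq word) (pi : {perm 'I_(size u)}) (P : pred word) :
  all P u -> all P [seq nth [::] u (pi i) | i <- enum 'I_(size u)].
Proof. move=> /allP h; rewrite all_map; apply/allP => i _ /=; apply: h; exact: mem_nth. Qed.

Lemma sizes l1 m C : good_C1 l1 m (C 0) -> (forall j, next_level (C j) (C j.+1)) ->
  forall j, [/\ all (fun w => size w == lens C l1 j) (C j), 0 < lens C l1 j & 0 < size (C j)].
Proof.
move=> [_ hs ha hp _] hN; elim=> [|j [IHa IHl IHs]].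
  have hs0 : 0 < size (C 0) by rewrite hs expn_gt0.
  split => //=.
  case: (C 0) hs0 ha hp => // w u _ /= /andP[/eqP <- _] /andP[/prefix001 [_ _ _ h3] _]; lia.
have hall : all (fun w => size w == lens C l1 j.+1) (C j.+1).
  case: (hN j) => _ hin _; apply/allP => w /hin [pi [_ ->]].
  rewrite /perm_word (@size_flatten_c _ (lens C l1 j)) ?perm_word_all //.
  by rewrite size_map size_enum_ord /= mulnC.
have hl : 0 < lens C l1 j.+1 by rewrite /= muln_gt0 IHl IHs.
split => //.
case: (hN j) => _ _; case E: (C j.+1) => [|w v] //= h.
have : size (flatten (C j)) = 0 by rewrite -h.
rewrite (@size_flatten_c _ _ IHa); lia.
Qed.

Lemma uniqC l1 m C : good_C1 l1 m (C 0) -> (forall j, next_level (C j) (C j.+1)) ->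
  forall j, uniq (C j).
Proof. by move=> [hu _ _ _ _] hN [|j] //; case: (hN j). Qed.

Lemma inP0 N : ~~ inP N 0.
Proof. rewrite /inP /=; apply/existsP => [[i /andP[h1 /eqP h2]]]; nia. Qed.

Lemma block_struct l1 m C : good_C1 l1 m (C 0) -> (forall j, next_level (C j) (C j.+1)) ->
  forall j w, w \in C j.+1 ->
  [/\ forall t, t < size (C j) -> take (lens C l1 j) (drop (t * lens C l1 j) w) \in C j,
      take (lens C l1 j) w = nth [::] (C j) 0 &
      forall t, 0 < t < size (C j) -> take (lens C l1 j) (drop (t * lens C l1 j) w) != nth [::] (C j) 0].
Proof.
move=> hC hN j w.
have [ha hl hs] := @sizes _ _ _ hC hN j.
have hu := @uniqC _ _ _ hC hN j.
case: (hN j) => _ hin _ /hin [pi [hfix ->]].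
set u := C j.
have hA : all (fun v => size v == lens C l1 j) [seq nth [::] u (pi i) | i <- enum 'I_(size u)].
  exact: perm_word_all.
have key : forall t : 'I_(size u), take (lens C l1 j) (drop (t * lens C l1 j) (perm_word pi)) = nth [::] u (pi t).
  move=> t; rewrite /perm_word block_flatten //; last by rewrite size_map size_enum_ord.
  by rewrite (nth_map t) ?size_enum_ord // nth_ord_enum.
pose o0 : 'I_(size u) := Ordinal hs.
have h0 : pi o0 = o0 by apply: hfix; exact: inP0.
split.
- move=> t ht; rewrite (key (Ordinal ht)); exact: mem_nth.
- have := key o0; rewrite /= mul0n drop0 => ->; by rewrite h0.
- move=> t /andP[ht0 ht]; rewrite (key (Ordinal ht)).
  rewrite (_ : 0 = val (pi o0)); last by rewrite h0.
  rewrite nth_uniq ?ltn_ord //; apply/eqP => /val_inj /perm_inj /(congr1 val) /=; lia.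
Qed.

Lemma levels l1 m C : good_C1 l1 m (C 0) -> (forall j, next_level (C j) (C j.+1)) ->
  forall d j w, w \in C (d + j) -> exists s : seq word, all (fun v => v \in C j) s /\ w = flatten s.
Proof.
move=> hC hN; elim=> [|d IH] j w.
  by move=> hw; exists [:: w]; rewrite /= hw cats0.
rewrite addSn; case: (hN (d + j)) => _ hin _ /hin [pi [_ ->]].
rewrite /perm_word.
have : all (fun v => v \in C (d + j)) [seq nth [::] (C (d + j)) (pi i) | i <- enum 'I_(size (C (d + j)))].
  by apply: perm_word_all; apply/allP.
elim: [seq _ | i <- _] => [|v t IHt] /=; first by exists [::].
move=> /andP[/IH [s1 [h1 ->]] /IHt [s2 [h2 ->]]].
by exists (s1 ++ s2); rewrite all_cat h1 h2 flatten_cat.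
Qed.

Lemma lift l1 m C : good_C1 l1 m (C 0) -> (forall j, next_level (C j) (C j.+1)) ->
  forall J w, w \in C J -> forall d, exists w', w' \in C (d + J) /\ infix w w'.
Proof.
move=> hC hN J w hw; elim=> [|d [w' [h1 h2]]]; first by exists w; rewrite infix_refl.
have [_ _ hs] := @sizes _ _ _ hC hN (d + J).+1.
exists (flatten (C (d + J))); split.
  case: (hN (d + J)) => _ _ <-; rewrite addSn; exact: mem_nth.
apply: (@infix_trans _ w') => //; exact: infix_flatten.
Qed.

Open Scope ring_scope.

Lemma int_divmod (k : int) (N : nat) : (0 < N)%N ->
  exists q : int, exists t : nat, k = q * N%:Z + t%:Z /\ (t < N)%N.
Proof.
move=> H. exists (k %/ N)%Z, (absz (k %% N)%Z).
have h1 := divz_eq k N. have h2 : (0 <= (k %% N)%Z) by apply: modz_ge0; lia.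
have h3 : ((k %% N)%Z < N%:Z) by apply: ltz_pmod; lia.
split; lia.
Qed.

Definition valid (C : nat -> seq word) l1 (x : int -> bool) j (r : int) :=
  forall k : int, window x (r + k * (lens C l1 j)%:Z) (lens C l1 j) \in C j.

Lemma valid_shift C l1 x j r q : valid C l1 x j r -> valid C l1 x j (r + q * (lens C l1 j)%:Z).
Proof.
move=> h k; have := h (k + q).
by rewrite (_ : r + (k + q) * _ = r + q * (lens C l1 j)%:Z + k * (lens C l1 j)%:Z) //; ring.
Qed.

Lemma valid_down l1 m C x : good_C1 l1 m (C 0) -> (forall j, next_level (C j) (C j.+1)) ->
  forall j r, valid C l1 x j.+1 r -> valid C l1 x j r.
Proof.
move=> hC hN j r h k.
have [_ hl hs] := @sizes _ _ _ hC hN j.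
have [q [t [-> ht]]] := @int_divmod k _ hs.
have hw := h q.
have [hb _ _] := @block_struct _ _ _ hC hN j _ hw.
have := hb t ht.
rewrite window_sub /=; last by nia.
by rewrite (_ : r + q * _ + _ = r + (q * (size (C j))%:Z + t%:Z) * (lens C l1 j)%:Z) //; lia.
Qed.

Lemma valid0 C l1 x j r : valid C l1 x j r -> window x r (lens C l1 j) \in C j.
Proof. by move=> /(_ 0); rewrite mul0r addr0. Qed.

Lemma uniq_lvl l1 m C x : good_C1 l1 m (C 0) -> (forall j, next_level (C j) (C j.+1)) ->
  forall j r r', valid C l1 x j r -> valid C l1 x j r' ->
  exists q : int, r' = r + q * (lens C l1 j)%:Z.
Proof.
move=> hC hN; elim=> [|j IH] r r' h h'.
  have [_ hl hs] := @sizes _ _ _ hC hN 0.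
  have [q [s [hq hsl]]] := @int_divmod (r' - r) _ hl.
  case: (posnP s) => hs0.
    by exists q; move: hq; rewrite hs0; lia.
  exfalso.
  have h2 : valid C l1 x 0 (r + s%:Z).
    by rewrite (_ : r + s%:Z = r' + (- q) * (lens C l1 0)%:Z); [exact: valid_shift | lia].
  move: hC => [_ _ ha hp hoo].
  have pre : forall a, window x a l1 \in C 0 ->
      [/\ x a = false, x (a + 1) = false, x (a + 2) = true & (3 <= l1)%N].
    move=> a ha'; move/allP: hp => /(_ _ ha') /prefix001 [].
    rewrite size_window => n0 n1 n2 h3.
    move: n0 n1 n2; rewrite !nth_window //=; try lia.
    by rewrite addr0 => -> -> ->.
  have [e0 e1 e2 hl3] := pre _ (valid0 h2).
  have w0 : window x r l1 \in C 0 := valid0 h.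
  have w1 : window x (r + l1%:Z) l1 \in C 0 by have := h 1; rewrite mul1r.
  have [f0 f1 f2 _] := pre _ w1.
  case: (ltnP s.+1 l1) => hsl1.
    have := hoo _ w0 s; rewrite size_window => /(_ hsl1).
    rewrite !nth_window //; try lia.
    rewrite e0 (_ : r + s.+1%:Z = r + s%:Z + 1); last lia.
    by rewrite e1 => /(_ erefl erefl); lia.
  have hs1 : s.+1 = l1 by move: hsl => /=; lia.
  move: e2; rewrite (_ : r + s%:Z + 2 = r + (lens C l1 0)%:Z + 1) /=; last lia.
  by rewrite f1.
have [_ hl hs] := @sizes _ _ _ hC hN j.
have [d hd] := IH r r' (valid_down hC hN h) (valid_down hC hN h').
have [q [t [hq ht]]] := @int_divmod d _ hs.
case: (posnP t) => ht0.
  exists q; rewrite hd hq ht0 /=; lia.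
exfalso.
have h2 : valid C l1 x j.+1 (r + (t * lens C l1 j)%N%:Z).
  rewrite (_ : r + _ = r' + (- q) * (lens C l1 j.+1)%:Z); first exact: valid_shift.
  rewrite hd hq /=; lia.
have [_ hb2 _] := @block_struct _ _ _ hC hN j _ (valid0 h2).
have [_ _ hb3] := @block_struct _ _ _ hC hN j _ (valid0 h).
have := hb3 t; rewrite ht0 ht => /(_ erefl).
rewrite window_sub /=; last nia.
rewrite -hb2 -(drop0 (window x _ (lens C l1 j.+1))) window_sub /=; last nia.
by rewrite addr0 eqxx.
Qed.

Close Scope ring_scope.
Definition Pn (C : nat -> seq word) l1 (x : int -> bool) j (n r : nat) :=
  forall i, i < 2 * n ->
    window x (r%:Z + (i%:Z - n%:Z) * (lens C l1 j)%:Z)%R (lens C l1 j) \in C j.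

Lemma exist_n l1 m C x : good_C1 l1 m (C 0) -> (forall j, next_level (C j) (C j.+1)) ->
  in_X C x -> forall j n, exists r, (r < lens C l1 j)%N /\ Pn C l1 x j n r.
Proof.
move=> hC hN hX j n.
have [ha hl hs] := @sizes _ _ _ hC hN j.
set l := lens C l1 j in ha hl *.
set A : int := (- ((n.+1 * l)%:Z))%R.
set len := ((n.+1).*2 * l)%N.
have [J [w [hw hinf]]] := hX A len.
have [w' [hw' hinf']] := @lift _ _ _ hC hN J w hw j.
have hinf2 : infix (window x A len) w' by apply: (@infix_trans _ w).
rewrite addnC in hw'.
have [s [hsC Ew]] := @levels _ _ _ hC hN J j w' hw'.
rewrite Ew in hinf2.
have hsz : all (fun v => size v == l) s.
  apply/allP => v /(allP hsC) hv; exact: (allP ha).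
move/infixP: hinf2 => [s1 [s3 E]].
set p := size s1.
have [q0 [rho [hp hrho]]] : exists q0 rho, (p = q0 * l + rho)%N /\ (rho < l)%N.
  by exists (p %/ l)%N, (p %% l)%N; rewrite -divn_eq ltn_pmod.
have hsize : (p + len <= size s * l)%N.
  by rewrite -(@size_flatten_c _ _ hsz) E !size_cat size_window /p leq_add2l leq_addr.
exists (if rho == 0%N then 0%N else l - rho).
split; first by case: eqP => h0; lia.
move=> i hi.
set r := (if rho == 0%N then 0%N else l - rho).
have [Q hQ] : exists Q, (p + (r + i.+1 * l) = Q * l)%N.
  rewrite /r; case: eqP => hr.
    by exists (q0 + i.+1)%N; rewrite hp hr; lia.
  by exists (q0 + 1 + i.+1)%N; rewrite hp; lia.
have hd : (r + i.+1 * l + l <= len)%N by rewrite /r /len; case: eqP => h0; nia.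
have hQs : (Q < size s)%N by rewrite -(ltn_pmul2r hl); lia.
have := allP hsC _ (mem_nth [::] hQs).
rewrite -(@block_flatten s l Q hsz hQs) -hQ E (addnC p) -drop_drop drop_size_cat // drop_cat size_window.
rewrite ifT; last lia.
rewrite takel_cat; last by rewrite size_drop size_window; lia.
rewrite window_sub //.
by rewrite (_ : (A + _ = r%:Z + (i%:Z - n%:Z) * l%:Z)%R) // /A; lia.
Qed.

From Stdlib Require Import Classical.

Lemma compact (P : nat -> nat -> Prop) b :
  (forall n n' r, n <= n' -> P n' r -> P n r) ->
  (forall n, exists r, r < b /\ P n r) -> exists r, r < b /\ forall n, P n r.
Proof.
move=> mono hall; apply: NNPP => H.
have hb : forall r, r < b -> exists n, ~ P n r.
  move=> r hr; apply: NNPP => H2; apply: H; exists r; split => // n.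
  by apply: NNPP => H3; apply: H2; exists n.
have : forall b', exists N, forall r, r < b' -> r < b -> ~ P N r.
  elim=> [|b' [N IH]]; first by exists 0.
  case: (ltnP b' b) => hb'.
    have [n hn] := hb _ hb'.
    exists (maxn N n) => r hr hrb hP.
    case: (ltnP r b') => hrb'.
      by apply: (IH r hrb' hrb); exact: (mono _ _ _ (leq_maxl N n) hP).
    have e : r = b' by lia.
    subst r; apply: hn; exact: (mono _ _ _ (leq_maxr N n) hP).
  by exists N => r hr hrb; apply: IH; lia.
move=> /(_ b) [N hN].
have [r [hr hP]] := hall N.
exact: (hN r hr hr hP).
Qed.

Lemma Pn_mono C l1 x j n n' r : n <= n' -> Pn C l1 x j n' r -> Pn C l1 x j n r.
Proof.
move=> hn h i hi.
have := h (i + (n' - n)) ltac:(lia).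
by rewrite (_ : ((i + (n' - n))%:Z - n'%:Z = i%:Z - n%:Z)%R) //; lia.
Qed.

Lemma Pn_valid C l1 x j r : (forall n, Pn C l1 x j n r) -> valid C l1 x j r%:Z.
Proof.
move=> h k.
have := h (absz k).+1 (absz (k + ((absz k).+1)%:Z)%R) ltac:(lia).
by rewrite (_ : ((absz (k + ((absz k).+1)%:Z)%R)%:Z - ((absz k).+1)%:Z = k)%R) //; lia.
Qed.

Theorem lemma4p2 :
  exists L : nat, forall (l1 m : nat) (C : nat -> seq word),
    L <= l1 -> l1 = m * m ->
    good_C1 l1 m (C 0) ->
    (forall j, next_level (C j) (C j.+1)) ->
    forall x : int -> bool, in_X C x ->
    forall j : nat,
      exists! r : nat, r < lens C l1 j /\
        forall k : int,
          window x (r%:Z + k * (lens C l1 j)%:Z)%R (lens C l1 j) \in C j.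
Proof.
exists 0 => l1 m C _ _ hC hN x hX j.
have [r [hr hP]] := @compact (Pn C l1 x j) _ (@Pn_mono C l1 x j) (@exist_n _ _ _ x hC hN hX j).
have hv := Pn_valid hP.
exists r; split; first by split.
move=> r' [hr' hv'].
have [q hq] := @uniq_lvl _ _ _ x hC hN j _ _ hv hv'.
case q0: (q <= -1)%R.
  have : (q * (lens C l1 j)%:Z <= - (lens C l1 j)%:Z)%R by nia.
  lia.
case q1: (1 <= q)%R.
  have : ((lens C l1 j)%:Z <= q * (lens C l1 j)%:Z)%R by nia.
  lia.
have q2 : q = 0%R by lia.
move: hq; rewrite q2 mul0r addr0; lia.
Qed.
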